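(* Let $\mathcal X$ be a real normed space equipped with isosceles orthogonality $\perp$, and let $\mathcal Y$ be a Banach space. Let $f,g,h,k:\mathcal X\to\mathcal Y$ satisfy $f(0)=g(0)=h(0)=k(0)=0$ and, for some $\varepsilon>0$, \[\|f(x+y)+g(x-y)-h(x)-k(y)\|\le\varepsilon\quad\text{for all }x,y\in\mathcal X\text{ with }x\perp y.\] Then $f$ is a linear combination (with real coefficients) of an approximately orthogonally Cauchy mapping, an approximately orthogonally quadratic mapping and an approximately orthogonally constant mapping, all from $\mathcal X$ to $\mathcal Y$. The same is true for $g$.
   Context: For $x,y$ in a real normed space $\mathcal X$, isosceles orthogonality is defined by $x\perp y$ if and only if $\|x+y\|=\|x-y\|$. A mapping $\varphi:\mathcal X\to\mathcal Y$ is: approximately orthogonally Cauchy if there is $\delta>0$ with $\|\varphi(x+y)-\varphi(x)-\varphi(y)\|\le\delta$ for all $x\perp y$; approximately orthogonally quadratic if there is $\delta>0$ with $\|\varphi(x+y)+\varphi(x-y)-2\varphi(x)-2\varphi(y)\|\le\delta$ for all $x\perp y$; approximately orthogonally constant if there is $\delta>0$ with $\|\varphi(x+y)-\varphi(x-y)\|\le\delta$ for all $x\perp y$. *)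

(* Defs.v *)
From HB Require Import structures.
From mathcomp Require Import all_boot all_order all_algebra.
From mathcomp Require Import all_classical all_reals all_analysis.
Set Implicit Arguments. Unset Strict Implicit. Unset Printing Implicit Defensive.
Import Order.TTheory GRing.Theory Num.Theory.
Import numFieldNormedType.Exports.
Local Open Scope ring_scope.

Definition iso_orth {R : realType} {X : normedModType R} (x y : X) : Prop :=
  `|x + y| = `|x - y|.

Definition approx_orth_cauchy {R : realType} {X Y : normedModType R}
  (phi : X -> Y) : Prop :=
  exists delta : R, 0 < delta /\
    forall x y : X, iso_orth x y -> `|phi (x + y) - phi x - phi y| <= delta.

Definition approx_orth_quadratic {R : realType} {X Y : normedModType R}
  (phi : X -> Y) : Prop :=
  exists delta : R, 0 < delta /\
    forall x y : X, iso_orth x y ->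
      `|phi (x + y) + phi (x - y) - 2 *: phi x - 2 *: phi y| <= delta.

Definition approx_orth_constant {R : realType} {X Y : normedModType R}
  (phi : X -> Y) : Prop :=
  exists delta : R, 0 < delta /\
    forall x y : X, iso_orth x y -> `|phi (x + y) - phi (x - y)| <= delta.

Definition lin_comb_CQK {R : realType} {X Y : normedModType R}
  (phi : X -> Y) : Prop :=
  exists (a b c : R) (p q r : X -> Y),
    [/\ approx_orth_cauchy p, approx_orth_quadratic q, approx_orth_constant r
      & forall x, phi x = a *: p x + b *: q x + c *: r x].

(* Main.v *)
Require Import Defs.
From HB Require Import structures.
From mathcomp Require Import all_boot all_order all_algebra.
From mathcomp Require Import all_classical all_reals all_analysis.
Import Order.TTheory GRing.Theory Num.Theory.
Import numFieldNormedType.Exports.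
Set Implicit Arguments. Unset Strict Implicit.
Local Open Scope ring_scope.
Inductive zexpr := EVar of nat | EZero | EAdd of zexpr & zexpr | EOpp of zexpr.

Fixpoint zeval (V : zmodType) (l : seq V) (e : zexpr) : V :=
  match e with
  | EVar n => nth 0 l n
  | EZero => 0
  | EAdd a b => zeval l a + zeval l b
  | EOpp a => - zeval l a
  end.

Fixpoint addl (s t : seq int) : seq int :=
  match s, t with
  | a :: s', b :: t' => (a + b) :: addl s' t'
  | [::], _ => t
  | _, [::] => s
  end.

Fixpoint znorm (e : zexpr) : seq int :=
  match e with
  | EVar n => nseq n 0 ++ [:: 1]
  | EZero => [::]
  | EAdd a b => addl (znorm a) (znorm b)
  | EOpp a => map (fun c => - c) (znorm a)
  end.

Fixpoint lin (V : zmodType) (l : seq V) (s : seq int) : V :=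
  match s with
  | [::] => 0
  | c :: s' => (head 0 l) *~ c + lin (behead l) s'
  end.

Lemma lin_addl (V : zmodType) (s t : seq int) (l : seq V) :
  lin l (addl s t) = lin l s + lin l t.
Proof.
elim: s t l => [|a s IH] [|b t] l /=; rewrite ?add0r ?addr0 //.
by rewrite IH mulrzDr addrACA.
Qed.

Lemma lin_opp (V : zmodType) (s : seq int) (l : seq V) :
  lin l (map (fun c => - c) s) = - lin l s.
Proof.
elim: s l => [|a s IH] l /=; first by rewrite oppr0.
by rewrite IH mulrNz opprD.
Qed.

Lemma lin_var (V : zmodType) n (l : seq V) : lin l (nseq n 0 ++ [:: 1]) = nth 0 l n.
Proof.
elim: n l => [|n IH] [|a l] /=; rewrite ?addr0 ?mulr1z ?mulr0z ?add0r //.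
by rewrite (IH [::]) ?nth_nil.
Qed.

Lemma lin_zeval (V : zmodType) (l : seq V) e : zeval l e = lin l (znorm e).
Proof.
elim: e => [n||a IHa b IHb|a IHa] /=.
- by rewrite lin_var.
- by [].
- by rewrite lin_addl IHa IHb.
- by rewrite lin_opp IHa.
Qed.

Lemma lin_zero (V : zmodType) (l : seq V) s : all (fun c => c == 0) s -> lin l s = 0.
Proof.
elim: s l => [|a s IH] l //= /andP[/eqP -> H].
by rewrite mulr0z add0r IH.
Qed.

Lemma zmod_decide (V : zmodType) (l : seq V) e1 e2 :
  all (fun c => c == 0) (znorm (EAdd e1 (EOpp e2))) -> zeval l e1 = zeval l e2.
Proof.
move=> H; apply/eqP; rewrite -subr_eq0; apply/eqP.
by have := lin_zero l H; rewrite -lin_zeval.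
Qed.

Ltac zmem x l :=
  lazymatch l with
  | cons ?a ?l' => tryif constr_eq a x then idtac else zmem x l'
  end.

Ltac zidx t l :=
  lazymatch l with
  | cons ?a ?l' => match constr:(Set) with
     | _ => let _ := constr:(@Logic.eq_refl _ a : @Logic.eq _ a t) in constr:(0%nat)
     | _ => let n := zidx t l' in constr:(S n)
     end
  end.

Ltac zcollect t acc :=
  lazymatch t with
  | @GRing.add _ ?a ?b => let acc' := zcollect a acc in zcollect b acc'
  | @GRing.opp _ ?a => zcollect a acc
  | @GRing.zero _ => acc
  | _ => match constr:(Set) with
         | _ => let _ := zidx t acc in acc
         | _ => constr:(cons t acc)
         end
  end.

Ltac zreify t l :=
  lazymatch t with
  | @GRing.add _ ?a ?b => let ea := zreify a l in let eb := zreify b l in constr:(EAdd ea eb)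
  | @GRing.opp _ ?a => let ea := zreify a l in constr:(EOpp ea)
  | @GRing.zero _ => constr:(EZero)
  | _ => let n := zidx t l in constr:(EVar n)
  end.

Ltac zmod_eq :=
  lazymatch goal with
  | |- @eq ?T ?lhs ?rhs =>
    let l0 := zcollect lhs (@nil T) in
    let l := zcollect rhs l0 in
    let e1 := zreify lhs l in
    let e2 := zreify rhs l in
    change (zeval l e1 = zeval l e2);
    apply: zmod_decide; vm_compute; reflexivity
  end.


Lemma orth0r (R : realType) (X : normedModType R) (x : X) : iso_orth x 0.
Proof. by rewrite /iso_orth addr0 subr0. Qed.

Lemma orth0l (R : realType) (X : normedModType R) (y : X) : iso_orth 0 y.
Proof. by rewrite /iso_orth add0r sub0r normrN. Qed.

Lemma orth_sym (R : realType) (X : normedModType R) (x y : X) :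
  iso_orth x y -> iso_orth y x.
Proof. by rewrite /iso_orth addrC => ->; rewrite distrC. Qed.

Lemma orth_negr (R : realType) (X : normedModType R) (x y : X) :
  iso_orth x y -> iso_orth x (- y).
Proof. by rewrite /iso_orth opprK => ->. Qed.

Lemma orth_negl (R : realType) (X : normedModType R) (x y : X) :
  iso_orth x y -> iso_orth (- x) y.
Proof. by move=> o; apply/orth_sym/orth_negr/orth_sym. Qed.

Lemma orth_negb (R : realType) (X : normedModType R) (x y : X) :
  iso_orth x y -> iso_orth (- x) (- y).
Proof. by move=> o; apply/orth_negl/orth_negr. Qed.

Lemma norm3 (R : realType) (Y : normedModType R) (t a b c : Y) (B : R) :
  `|a| <= B -> `|b| <= B -> `|c| <= B -> t = a + b + c -> `|t| <= B + B + B.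
Proof.
move=> ha hb hc ->; apply: (le_trans (ler_normD _ _)); rewrite lerD //.
by apply: (le_trans (ler_normD _ _)); rewrite lerD.
Qed.

Lemma norm4 (R : realType) (Y : normedModType R) (t a b c d : Y) (B : R) :
  `|a| <= B -> `|b| <= B -> `|c| <= B -> `|d| <= B -> t = a + b + c + d ->
  `|t| <= B + B + B + B.
Proof.
move=> ha hb hc hd ->; apply: (le_trans (ler_normD _ _)); rewrite lerD //.
exact: (norm3 ha hb hc).
Qed.

Lemma normN_le (R : realType) (Y : normedModType R) (a : Y) (B : R) :
  `|a| <= B -> `|- a| <= B.
Proof. by rewrite normrN. Qed.

Lemma Dgen (R : realType) (X : normedModType R) (Y : normedModType R)
  (f g h k : X -> Y) (eps : R) : h 0 = 0 -> k 0 = 0 ->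
  (forall x y : X, iso_orth x y -> `|f (x + y) + g (x - y) - h x - k y| <= eps) ->
  forall x y s d c, s = x + y -> d = x - y -> c = - y -> iso_orth x y ->
  `|f s + g d - f x - g x - f y - g c| <= eps + eps + eps.
Proof.
move=> h0 k0 H x y s d c -> -> -> o.
have e1 := H x y o.
have e2 := H x 0 (orth0r x); rewrite k0 addr0 !subr0 in e2.
have e3 := H 0 y (orth0l y); rewrite h0 add0r sub0r subr0 in e3.
apply: (norm3 e1 (normN_le e2) (normN_le e3)); zmod_eq.
Qed.

Theorem theorem3p1 (R : realType) (X : normedModType R)
  (Y : completeNormedModType R) (f g h k : X -> Y) (eps : R) :
  f 0 = 0 -> g 0 = 0 -> h 0 = 0 -> k 0 = 0 ->
  0 < eps ->
  (forall x y : X, iso_orth x y -> `|f (x + y) + g (x - y) - h x - k y| <= eps) ->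
  lin_comb_CQK f /\ lin_comb_CQK g.
Proof.
move=> f0 g0 h0 k0 e0 H.
have D := Dgen h0 k0 H.
set B := eps + eps + eps.
have B0 : 0 < B + B + B + B.
  by rewrite /B; do ! apply: addr_gt0 => //.
pose q := fun z => f z + g z + (f (- z) + g (- z)).
pose r := fun z => f z - g z + (f (- z) - g (- z)).
have Qq : approx_orth_quadratic q.
  exists (B + B + B + B); split => // x y o; rewrite /q /=.
  rewrite !scaler_nat !mulr2n.
  have h1 := D x y (x + y) (x - y) (- y) ltac:(zmod_eq) ltac:(zmod_eq) ltac:(zmod_eq) o.
  have h2 := D x (- y) (x - y) (x + y) y ltac:(zmod_eq) ltac:(zmod_eq) ltac:(zmod_eq) (orth_negr o).
  have h3 := D (- x) (- y) (- (x + y)) (- (x - y)) y ltac:(zmod_eq) ltac:(zmod_eq) ltac:(zmod_eq) (orth_negb o).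
  have h4 := D (- x) y (- (x - y)) (- (x + y)) (- y) ltac:(zmod_eq) ltac:(zmod_eq) ltac:(zmod_eq) (orth_negl o).
  apply: (norm4 h1 h2 h3 h4); zmod_eq.
have Kr : approx_orth_constant r.
  exists (B + B + B + B); split => // x y o; rewrite /r /=.
  have h1 := D x y (x + y) (x - y) (- y) ltac:(zmod_eq) ltac:(zmod_eq) ltac:(zmod_eq) o.
  have h2 := D x (- y) (x - y) (x + y) y ltac:(zmod_eq) ltac:(zmod_eq) ltac:(zmod_eq) (orth_negr o).
  have h3 := D (- x) (- y) (- (x + y)) (- (x - y)) y ltac:(zmod_eq) ltac:(zmod_eq) ltac:(zmod_eq) (orth_negb o).
  have h4 := D (- x) y (- (x - y)) (- (x + y)) (- y) ltac:(zmod_eq) ltac:(zmod_eq) ltac:(zmod_eq) (orth_negl o).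
  apply: (norm4 h1 (normN_le h2) h3 (normN_le h4)); zmod_eq.
have four : (4 : R) != 0 by rewrite pnatr_eq0.
have quarter : forall a : Y, (4 : R)^-1 *: (a + a + a + a) = a.
  move=> a; have -> : a + a + a + a = (4 : R) *: a.
    by rewrite scaler_nat !mulrS mulr0n addr0 !addrA.
  by rewrite scalerA mulVf // scale1r.
split.
- pose p := fun z => f z - f (- z) + (f z - f (- z)).
  exists 4^-1, 4^-1, 4^-1, p, q, r; split => //.
    exists (B + B + B + B); split => // x y o; rewrite /p /=.
    have h1 := D x y (x + y) (x - y) (- y) ltac:(zmod_eq) ltac:(zmod_eq) ltac:(zmod_eq) o.
    have h2 := D (- x) (- y) (- (x + y)) (y - x) y ltac:(zmod_eq) ltac:(zmod_eq) ltac:(zmod_eq) (orth_negb o).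
    have h3 := D y x (x + y) (y - x) (- x) ltac:(zmod_eq) ltac:(zmod_eq) ltac:(zmod_eq) (orth_sym o).
    have h4 := D (- y) (- x) (- (x + y)) (x - y) x ltac:(zmod_eq) ltac:(zmod_eq) ltac:(zmod_eq) (orth_negb (orth_sym o)).
    apply: (norm4 h1 (normN_le h2) h3 (normN_le h4)); zmod_eq.
  move=> z; rewrite -!scalerDr -[LHS]quarter /p /q /r; congr (_ *: _); zmod_eq.
- pose p := fun z => g z - g (- z) + (g z - g (- z)).
  exists 4^-1, 4^-1, (- 4^-1), p, q, r; split => //.
    exists (B + B + B + B); split => // x y o; rewrite /p /=.
    have h1 := D x (- y) (x - y) (x + y) y ltac:(zmod_eq) ltac:(zmod_eq) ltac:(zmod_eq) (orth_negr o).
    have h2 := D y (- x) (y - x) (x + y) x ltac:(zmod_eq) ltac:(zmod_eq) ltac:(zmod_eq) (orth_negr (orth_sym o)).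
    have h3 := D (- x) y (y - x) (- (x + y)) (- y) ltac:(zmod_eq) ltac:(zmod_eq) ltac:(zmod_eq) (orth_negl o).
    have h4 := D (- y) x (x - y) (- (x + y)) (- x) ltac:(zmod_eq) ltac:(zmod_eq) ltac:(zmod_eq) (orth_negl (orth_sym o)).
    apply: (norm4 h1 h2 (normN_le h3) (normN_le h4)); zmod_eq.
  move=> z; rewrite scaleNr -scalerN -!scalerDr -[LHS]quarter /p /q /r; congr (_ *: _); zmod_eq.
Qed.
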